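(* Let $P:=\operatorname{conv}\{p_0,p_1,p_2\}$ such that $p_0,p_1,p_2 \in \mathbb{Z}^2$ are the only integer points in $P$. Let $Q:=\operatorname{conv}\{q_0,q_1,q_2\}$ be a triangle whose vertices are given by the barycentric coordinates with respect to $P$, that is, by a $3\times 3$-matrix $B$ such that \[ \begin{pmatrix} q_0^\top & 1 \\ q_1^\top & 1 \\ q_2^\top & 1 \end{pmatrix} = B \begin{pmatrix} p_0^\top & 1 \\ p_1^\top & 1 \\ p_2^\top & 1 \end{pmatrix}. \] Then \[ \operatorname{lw}(Q) = \min \{ \|D B z\|_\infty : z \in \mathbb{Z}^3 \text{ and the coordinates of } z \text{ are not all equal}\}, \] where \[ D:=\begin{pmatrix} -1 & 1 & 0 \\ 0 & -1 & 1 \\ 1 & 0 & -1 \end{pmatrix}. \] Furthermore, if $p_i=(1-x_i) q_{i+1} + x_i q_{i+2}$ for $i=0,1,2$ (indices modulo 3) with $0<x_i<1$ (that is, $Q$ is circumscribed about $P$), then \[ \operatorname{lw}(Q) = \frac{\min \{ \max_{i=0,1,2} |x_i y_i + (1-x_{i+1}) y_{i+1}| : y \in \mathbb{Z}^3 \setminus\{o\},\ y_0+y_1+y_2=0\}}{x_0x_1x_2 + (1-x_0)(1-x_1)(1-x_2)} \] and \[ \operatorname{area}(Q) = \frac{1}{2 (x_0x_1x_2 + (1-x_0)(1-x_1)(1-x_2))}. \]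
   Context: Vectors in $\mathbb{R}^2$ are column vectors, $^\top$ denotes transposition, $o$ the origin, and $\|\cdot\|_\infty$ the maximum norm. For a closed convex set $K\subseteq\mathbb{R}^2$ with non-empty interior, the width function is $w(K,u):=\max\{u^\top x : x\in K\}-\min\{u^\top x: x\in K\}$ for $u\in\mathbb{R}^2$, and the lattice width is $\operatorname{lw}(K):=\min\{w(K,u): u\in\mathbb{Z}^2\setminus\{o\}\}$. Sequences with 3 elements are indexed modulo 3. *)

(* Defs.v *)
From HB Require Import structures.
From mathcomp Require Import all_boot all_order all_algebra.
From mathcomp Require Import boolp classical_sets reals.
Set Implicit Arguments. Unset Strict Implicit. Unset Printing Implicit Defensive.
Import Order.TTheory GRing.Theory Num.Theory.
Local Open Scope ring_scope.
Local Open Scope classical_set_scope.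

Section Defs.
Variable R : realType.

Definition s3 (i : 'I_3) : 'I_3 := ordS i.

Definition i0 : 'I_3 := ord0.
Definition i1 : 'I_3 := inord 1.
Definition i2 : 'I_3 := inord 2.

Definition max3 (f : 'I_3 -> R) : R := Num.max (f i0) (Num.max (f i1) (f i2)).

Definition dot (u x : R * R) : R := u.1 * x.1 + u.2 * x.2.

Definition Z2 : set (R * R) := [set x | exists a b : int, x = (a%:~R, b%:~R)].

Definition conv3 (p : 'I_3 -> R * R) : set (R * R) :=
  [set x | exists a : 'I_3 -> R, (forall i, 0 <= a i) /\ \sum_(i < 3) a i = 1 /\
     x = (\sum_(i < 3) a i * (p i).1, \sum_(i < 3) a i * (p i).2)].

Definition width (K : set (R * R)) (u : R * R) : R :=
  sup [set dot u x | x in K] - inf [set dot u x | x in K].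

Definition lw (K : set (R * R)) : R :=
  inf [set width K u | u in [set u | Z2 u /\ u <> (0, 0)]].

Definition is_min (S : set R) (m : R) : Prop := S m /\ forall s, S s -> m <= s.

Definition homog (p : 'I_3 -> R * R) : 'M[R]_3 :=
  \matrix_(i < 3, j < 3)
     (if (j : nat) == 0%N then (p i).1 else if (j : nat) == 1%N then (p i).2 else 1).

Definition Dmat : 'M[R]_3 :=
  \matrix_(i < 3, j < 3) (if j == i then -1 else if j == s3 i then 1 else 0).

Definition norminf (v : 'cV[R]_3) : R := max3 (fun i => `|v i 0|).

Definition zcol (z : 'I_3 -> int) : 'cV[R]_3 := \col_(i < 3) (z i)%:~R.

Definition tri_area (q : 'I_3 -> R * R) : R := `|\det (homog q)| / 2.

End Defs.
Arguments Dmat {R}.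
Arguments zcol {R}.
Arguments Z2 {R}.

(* Main.v *)
Require Import Defs.
From HB Require Import structures.
From mathcomp Require Import all_boot all_order all_algebra.
From mathcomp Require Import boolp classical_sets reals.
From mathcomp Require Import ring lra zify.
Import Order.TTheory GRing.Theory Num.Theory.
Local Open Scope ring_scope.
Local Open Scope classical_set_scope.

Lemma s3_0 : s3 i0 = i1. Proof. by apply/val_inj; rewrite /= inordK. Qed.
Lemma s3_1 : s3 i1 = i2. Proof. by apply/val_inj; rewrite /= !inordK. Qed.
Lemma s3_2 : s3 i2 = i0. Proof. by apply/val_inj; rewrite /= !inordK. Qed.
Lemma ord3P (i : 'I_3) : i = i0 \/ i = i1 \/ i = i2.
Proof. case: i => [[|[|[|n]]] H]; [left|right;left|right;right|by []]; by apply/val_inj; rewrite /= ?inordK. Qed.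
Lemma e01 : (i0 == i1) = false. Proof. by apply/eqP => /(congr1 val); rewrite /= inordK. Qed.
Lemma e02 : (i0 == i2) = false. Proof. by apply/eqP => /(congr1 val); rewrite /= inordK. Qed.
Lemma e10 : (i1 == i0) = false. Proof. by apply/eqP => /(congr1 val); rewrite /= inordK. Qed.
Lemma e12 : (i1 == i2) = false. Proof. by apply/eqP => /(congr1 val); rewrite /= !inordK. Qed.
Lemma e20 : (i2 == i0) = false. Proof. by apply/eqP => /(congr1 val); rewrite /= inordK. Qed.
Lemma e21 : (i2 == i1) = false. Proof. by apply/eqP => /(congr1 val); rewrite /= !inordK. Qed.
Definition eqs3 := (e01, e02, e10, e12, e20, e21, eqxx, s3_0, s3_1, s3_2).

Section Gen.
Context {R : realType}.

Lemma sum3 (f : 'I_3 -> R) : \sum_(i < 3) f i = f i0 + f i1 + f i2.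
Proof. rewrite !big_ord_recr big_ord0 /= add0r.
congr (f _ + f _ + f _); apply: val_inj; by rewrite /= ?inordK. Qed.

Lemma det3 (A : 'M[R]_3) : \det A =
  A i0 i0 * (A i1 i1 * A i2 i2 - A i1 i2 * A i2 i1)
  - A i0 i1 * (A i1 i0 * A i2 i2 - A i1 i2 * A i2 i0)
  + A i0 i2 * (A i1 i0 * A i2 i1 - A i1 i1 * A i2 i0).
Proof.
rewrite (expand_det_row _ i0) sum3 /cofactor.
rewrite !(expand_det_row _ ord0) !big_ord_recr !big_ord0 /= !add0r /cofactor !det_mx11 !mxE /=.
repeat match goal with |- context [@fun_of_matrix _ _ _ A ?a ?b] =>
  first [ lazymatch a with i0 => fail | i1 => fail | i2 => fail | _ => idtac end;
          first [ have ->: a = i0 by apply: val_inj; rewrite /= ?inordK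
                | have ->: a = i1 by apply: val_inj; rewrite /= ?inordK
                | have ->: a = i2 by apply: val_inj; rewrite /= ?inordK ]
        | lazymatch b with i0 => fail | i1 => fail | i2 => fail | _ => idtac end;
          first [ have ->: b = i0 by apply: val_inj; rewrite /= ?inordK
                | have ->: b = i1 by apply: val_inj; rewrite /= ?inordK
                | have ->: b = i2 by apply: val_inj; rewrite /= ?inordK ] ] end.
rewrite /= ?inordK //=; ring.
Qed.

Definition cross (p : 'I_3 -> R * R) : R :=
  ((p i1).1 - (p i0).1) * ((p i2).2 - (p i0).2) - ((p i1).2 - (p i0).2) * ((p i2).1 - (p i0).1).

Lemma homogE (p : 'I_3 -> R * R) i :
  [/\ homog p i i0 = (p i).1, homog p i i1 = (p i).2 & homog p i i2 = 1].
Proof. by rewrite !mxE /= ?inordK. Qed.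

Lemma det_homog p : \det (homog p) = cross p.
Proof.
rewrite det3 /cross.
have [a1 a2 a3] := homogE p i0; have [b1 b2 b3] := homogE p i1; have [c1 c2 c3] := homogE p i2.
rewrite a1 a2 a3 b1 b2 b3 c1 c2 c3; ring.
Qed.

Definition vec3 (u : R * R) (c : R) : 'cV[R]_3 :=
  \col_(j < 3) (if (j : nat) == 0%N then u.1 else if (j : nat) == 1%N then u.2 else c).

Lemma homog_vec3 p u c i : (homog p *m vec3 u c) i 0 = dot u (p i) + c.
Proof.
rewrite mxE sum3. have [a1 a2 a3] := homogE p i.
rewrite a1 a2 a3 !mxE /= ?inordK // /dot /=; ring.
Qed.

Lemma Dmat_mul (w : 'cV[R]_3) i : (Dmat *m w) i 0 = w (s3 i) 0 - w i 0.
Proof.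
rewrite mxE sum3 !mxE.
case: (ord3P i) => [->|[->|->]]; rewrite !eqs3 /=; ring.
Qed.

Definition F3 (a : 'I_3 -> R) : R := max3 (fun i => `|a (s3 i) - a i|).

Lemma norminf_D (w : 'cV[R]_3) : norminf (Dmat *m w) = F3 (fun i => w i 0).
Proof. by rewrite /norminf /F3 /max3 !Dmat_mul. Qed.

Lemma maxmin (a0 a1 a2 : R) :
  Num.max a0 (Num.max a1 a2) - Num.min a0 (Num.min a1 a2) =
  Num.max `|a1 - a0| (Num.max `|a2 - a1| `|a0 - a2|).
Proof.
have h1 : `|a1 - a0| <= Num.max `|a1 - a0| (Num.max `|a2 - a1| `|a0 - a2|) by rewrite le_max lexx.
have h2 : `|a2 - a1| <= Num.max `|a1 - a0| (Num.max `|a2 - a1| `|a0 - a2|) by rewrite !le_max lexx !orbT.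
have h3 : `|a0 - a2| <= Num.max `|a1 - a0| (Num.max `|a2 - a1| `|a0 - a2|) by rewrite !le_max lexx !orbT.
move: h1 h2 h3; rewrite !ler_norml => /andP[h1 h1'] /andP[h2 h2'] /andP[h3 h3'].
apply/eqP; rewrite eq_le; apply/andP; split.
  rewrite lerBlDl !ge_max -!lerBlDr !le_min.
  apply/andP; split; first (apply/andP; split; [lra| apply/andP; split; lra]).
  apply/andP; split; (apply/andP; split; [lra| apply/andP; split; lra]).
have hM : forall y, y <= Num.max a0 (Num.max a1 a2) -> True by [].
have m0 : a0 <= Num.max a0 (Num.max a1 a2) by rewrite le_max lexx.
have m1 : a1 <= Num.max a0 (Num.max a1 a2) by rewrite !le_max lexx !orbT.
have m2 : a2 <= Num.max a0 (Num.max a1 a2) by rewrite !le_max lexx !orbT.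
have n0 : Num.min a0 (Num.min a1 a2) <= a0 by rewrite ge_min lexx.
have n1 : Num.min a0 (Num.min a1 a2) <= a1 by rewrite !ge_min lexx !orbT.
have n2 : Num.min a0 (Num.min a1 a2) <= a2 by rewrite !ge_min lexx !orbT.
rewrite !ge_max !ler_norml.
apply/andP; split; first (apply/andP; split; lra).
apply/andP; split; (apply/andP; split; lra).
Qed.


Lemma width_F (q : 'I_3 -> R * R) u : width (conv3 q) u = F3 (fun i => dot u (q i)).
Proof.
set a := fun i => dot u (q i).
set M := Num.max (a i0) (Num.max (a i1) (a i2)).
set m := Num.min (a i0) (Num.min (a i1) (a i2)).
set E := [set dot u x | x in conv3 q].
have Ea : forall k, E (a k).
  move=> k; exists (q k) => //.
  exists (fun i => if i == k then 1 else 0); split; [|split].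
  - by move=> i; case: ifP.
  - by rewrite sum3; case: (ord3P k) => [->|[->|->]]; rewrite !eqs3 /=; ring.
  - by case: (ord3P k) => [->|[->|->]]; rewrite !sum3 !eqs3 /= !mul1r !mul0r ?addr0 ?add0r; case: (q _).
have m0 : a i0 <= M by rewrite le_max lexx.
have m1 : a i1 <= M by rewrite !le_max lexx !orbT.
have m2 : a i2 <= M by rewrite !le_max lexx !orbT.
have n0 : m <= a i0 by rewrite ge_min lexx.
have n1 : m <= a i1 by rewrite !ge_min lexx !orbT.
have n2 : m <= a i2 by rewrite !ge_min lexx !orbT.
have Eb : forall e, E e -> m <= e <= M.
  move=> e [x [l [l0 [l1 ->]]] <-].
  have -> : dot u (\sum_(i < 3) l i * (q i).1, \sum_(i < 3) l i * (q i).2) =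
     l i0 * a i0 + l i1 * a i1 + l i2 * a i2 by rewrite /a /dot !sum3 /=; ring.
  move: l1; rewrite sum3 => l1.
  have := l0 i0; have := l0 i1; have := l0 i2 => h2 h1 h0.
  apply/andP; split; nra.
have supE : sup E = M.
  apply/eqP; rewrite eq_le; apply/andP; split.
    by apply: ge_sup; [exists (a i0); exact: Ea | move=> e /Eb /andP[]].
  have hs : has_sup E by split; [exists (a i0); exact: Ea | exists M => e /Eb /andP[]].
  by rewrite !ge_max !(sup_upper_bound hs) //; exact: Ea.
have infE : inf E = m.
  apply/eqP; rewrite eq_le; apply/andP; split; last first.
    by apply: lb_le_inf; [exists (a i0); exact: Ea | move=> e /Eb /andP[]].
  have hs : has_lbound E by exists m => e /Eb /andP[].
  by rewrite !le_min !(ge_inf hs) //; exact: Ea.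
by rewrite /width -/E supE infE /F3 /max3 !eqs3 maxmin.
Qed.

Lemma lin0 (a b c d l m : R) : a * d - b * c != 0 ->
  l * a + m * c = 0 -> l * b + m * d = 0 -> l = 0 /\ m = 0.
Proof.
move=> hD h1 h2.
have hl : l * (a * d - b * c) = 0.
  have -> : l * (a * d - b * c) = d * (l * a + m * c) - c * (l * b + m * d) by ring.
  by rewrite h1 h2; ring.
have hm : m * (a * d - b * c) = 0.
  have -> : m * (a * d - b * c) = a * (l * b + m * d) - b * (l * a + m * c) by ring.
  by rewrite h1 h2; ring.
move/eqP: hl; rewrite mulf_eq0 (negbTE hD) orbF => /eqP ->.
by move/eqP: hm; rewrite mulf_eq0 (negbTE hD) orbF => /eqP ->.
Qed.

Lemma floor_bounds (x : R) : 0 <= x - (Num.floor x)%:~R < 1.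
Proof.
have h1 := floor_le x; have h2 := floorD1_gt x.
rewrite intrD in h2; apply/andP; split; lra.
Qed.

Lemma core (X Y : 'I_3 -> int)
  (hponly : forall x, Z2 x -> conv3 (fun i => ((X i)%:~R, (Y i)%:~R) : R * R) x ->
            exists i, x = ((X i)%:~R, (Y i)%:~R))
  (a := (X i1)%:~R - (X i0)%:~R : R) (b := (Y i1)%:~R - (Y i0)%:~R : R)
  (c := (X i2)%:~R - (X i0)%:~R : R) (d := (Y i2)%:~R - (Y i0)%:~R : R)
  (hD : a * d - b * c != 0) (al be : R) :
  Z2 (al * a + be * c, al * b + be * d) ->
  al = (Num.floor al)%:~R /\ be = (Num.floor be)%:~R.
Proof.
move=> [s [t [hs ht]]].
set fa := Num.floor al; set fb := Num.floor be.
set al' := al - fa%:~R; set be' := be - fb%:~R.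
have /andP[ha0 ha1] : 0 <= al' < 1 by apply: floor_bounds.
have /andP[hb0 hb1] : 0 <= be' < 1 by apply: floor_bounds.
suff : al' = 0 /\ be' = 0 by rewrite /al' /be' => -[? ?]; split; lra.
apply: contrapT => hne.
have ws : al' * a + be' * c = (s - fa * (X i1 - X i0) - fb * (X i2 - X i0))%:~R.
  by rewrite !(rmorphB, rmorphM) /= -hs /al' /be' /a /c; ring.
have wt : al' * b + be' * d = (t - fa * (Y i1 - Y i0) - fb * (Y i2 - Y i0))%:~R.
  by rewrite !(rmorphB, rmorphM) /= -ht /al' /be' /b /d; ring.
set S := s - _ - _ in ws; set T := t - _ - _ in wt; clearbody S T.
case: (lerP (al' + be') 1) => hab.
- have [i hi] : exists i, ((X i0)%:~R + al' * a + be' * c, (Y i0)%:~R + al' * b + be' * d) =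
      (((X i)%:~R, (Y i)%:~R) : R * R).
    apply: hponly.
by exists (X i0 + S), (Y i0 + T); rewrite !rmorphD /= -ws -wt !addrA.
    exists (fun i => if i == i0 then 1 - al' - be' else if i == i1 then al' else be'); split; [|split].
    + by move=> i; case: (ord3P i) => [->|[->|->]]; rewrite !eqs3 //; lra.
    + by rewrite sum3 !eqs3; ring.
    + by rewrite !sum3 !eqs3 /= /a /b /c /d; congr (_, _); ring.
  case: hi => h1 h2.
  case: (ord3P i) h1 h2 => [->|[->|->]] h1 h2.
  + apply: hne; apply: (@lin0 a b c d al' be' hD); lra.
  + have [] : al' - 1 = 0 /\ be' = 0 by apply: (@lin0 a b c d (al' - 1) (be') hD); rewrite /a /b /c /d in h1 h2 *; lra.
    lra.
  + have [] : al' = 0 /\ be' - 1 = 0 by apply: (@lin0 a b c d (al') (be' - 1) hD); rewrite /a /b /c /d in h1 h2 *; lra.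
    lra.
- have [i hi] : exists i, ((X i0)%:~R + (1 - al') * a + (1 - be') * c,
                           (Y i0)%:~R + (1 - al') * b + (1 - be') * d) =
      (((X i)%:~R, (Y i)%:~R) : R * R).
    apply: hponly.
      exists (X i0 + (X i1 - X i0) + (X i2 - X i0) - S), (Y i0 + (Y i1 - Y i0) + (Y i2 - Y i0) - T).
      rewrite !(rmorphD, rmorphB, rmorphN) /= -ws -wt /a /b /c /d; congr (_, _); ring.
    exists (fun i => if i == i0 then al' + be' - 1 else if i == i1 then 1 - al' else 1 - be'); split; [|split].
    + by move=> i; case: (ord3P i) => [->|[->|->]]; rewrite !eqs3 //; lra.
    + by rewrite sum3 !eqs3; ring.
    + by rewrite !sum3 !eqs3 /= /a /b /c /d; congr (_, _); ring.
  case: hi => h1 h2.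
  case: (ord3P i) h1 h2 => [->|[->|->]] h1 h2.
  + have [] : 1 - al' = 0 /\ 1 - be' = 0 by apply: (@lin0 a b c d (1 - al') (1 - be') hD); rewrite /a /b /c /d in h1 h2 *; lra.
    lra.
  + have [] : - al' = 0 /\ 1 - be' = 0 by apply: (@lin0 a b c d (- al') (1 - be') hD); rewrite /a /b /c /d in h1 h2 *; lra.
    lra.
  + have [] : 1 - al' = 0 /\ - be' = 0 by apply: (@lin0 a b c d (1 - al') (- be') hD); rewrite /a /b /c /d in h1 h2 *; lra.
    lra.
Qed.

Lemma DK1 (D K : int) : D * K = 1 -> D * D = 1.
Proof.
move=> h; have : D \is a intUnitRing.unitz by apply: (intUnitRing.unitzPl (n := K)); rewrite mulrC.
by rewrite qualifE /= => /orP[] /eqP ->.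
Qed.

Lemma unimod (X Y : 'I_3 -> int)
  (hponly : forall x, Z2 x -> conv3 (fun i => ((X i)%:~R, (Y i)%:~R) : R * R) x ->
            exists i, x = ((X i)%:~R, (Y i)%:~R))
  (aI := X i1 - X i0) (bI := Y i1 - Y i0) (cI := X i2 - X i0) (dI := Y i2 - Y i0)
  (hD : (aI * dI - bI * cI)%:~R != 0 :> R) :
  (aI * dI - bI * cI) * (aI * dI - bI * cI) = 1.
Proof.
set D := aI * dI - bI * cI in hD *.
have ea : aI%:~R = (X i1)%:~R - (X i0)%:~R :> R by rewrite rmorphB.
have eb : bI%:~R = (Y i1)%:~R - (Y i0)%:~R :> R by rewrite rmorphB.
have ec : cI%:~R = (X i2)%:~R - (X i0)%:~R :> R by rewrite rmorphB.
have ed : dI%:~R = (Y i2)%:~R - (Y i0)%:~R :> R by rewrite rmorphB.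
have eD : D%:~R = aI%:~R * dI%:~R - bI%:~R * cI%:~R :> R by rewrite /D rmorphB !rmorphM.
set a : R := aI%:~R in ea eD *; set b : R := bI%:~R in eb eD *.
set c : R := cI%:~R in ec eD *; set d : R := dI%:~R in ed eD *.
have hD' : ((X i1)%:~R - (X i0)%:~R) * ((Y i2)%:~R - (Y i0)%:~R) -
           ((Y i1)%:~R - (Y i0)%:~R) * ((X i2)%:~R - (X i0)%:~R) != 0 :> R.
  by rewrite -ea -eb -ec -ed -eD.
set De : R := D%:~R in hD eD *.
have [|k1 k2] := @core X Y hponly hD' (d / De) (- b / De).
  exists 1, 0; rewrite -ea -eb -ec -ed; congr (_, _); rewrite eD in hD *; field => //.
have [|k3 k4] := @core X Y hponly hD' (- c / De) (a / De).
  exists 0, 1; rewrite -ea -eb -ec -ed; congr (_, _); rewrite eD in hD *; field => //.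
set K1 := Num.floor _ in k1; set K2 := Num.floor _ in k2.
set K3 := Num.floor _ in k3; set K4 := Num.floor _ in k4.
have hK : (D * (K4 * K1 - K2 * K3))%:~R = 1 :> R.
  rewrite (rmorphM _ D) -/De !(rmorphB, rmorphM) /= -k1 -k2 -k3 -k4.
  rewrite eD in hD *; rewrite -?ea -?eb -?ec -?ed; field; rewrite ?eD ?mulf_neq0 //.
apply: (@DK1 D (K4 * K1 - K2 * K3)).
by apply/eqP; rewrite -(eqr_int R) hK.
Qed.

Lemma solve2 (aI bI cI dI : int) (h : (aI * dI - bI * cI) * (aI * dI - bI * cI) = 1) (r1 r2 : int) :
  exists u1 u2 : int, u1 * aI + u2 * bI = r1 /\ u1 * cI + u2 * dI = r2.
Proof.
set D := aI * dI - bI * cI in h.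
exists (D * (r1 * dI - r2 * bI)), (D * (aI * r2 - cI * r1)); split.
  by rewrite -[RHS]mulr1 -h /D; ring.
by rewrite -[RHS]mulr1 -h /D; ring.
Qed.

Lemma indep2 (aI bI cI dI : int) (h : (aI * dI - bI * cI) * (aI * dI - bI * cI) = 1) (a b : int) :
  a * aI + b * bI = 0 -> a * cI + b * dI = 0 -> a = 0 /\ b = 0.
Proof.
move=> h1 h2; split.
  rewrite -[a]mulr1 -h.
  have -> : a * ((aI * dI - bI * cI) * (aI * dI - bI * cI)) =
     (aI * dI - bI * cI) * (dI * (a * aI + b * bI) - bI * (a * cI + b * dI)) by ring.
  by rewrite h1 h2; ring.
rewrite -[b]mulr1 -h.
have -> : b * ((aI * dI - bI * cI) * (aI * dI - bI * cI)) =
   (aI * dI - bI * cI) * (aI * (a * cI + b * dI) - cI * (a * aI + b * bI)) by ring.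
by rewrite h1 h2; ring.
Qed.

Lemma seq_min (T : eqType) (s : seq T) (P : T -> Prop) (f : T -> R) :
  (exists2 x, x \in s & P x) ->
  exists x, [/\ x \in s, P x & forall y, y \in s -> P y -> f x <= f y].
Proof.
elim: s => [[x]//|y s IH] hex.
case: (pselect (exists2 x, x \in s & P x)) => [/IH [x [xs Px hx]]|hn].
  case: (pselect (P y /\ f y < f x)) => [[Py lt]|hn2].
    exists y; split => //; first by rewrite inE eqxx.
    move=> z; rewrite inE => /orP[/eqP -> //|zs Pz].
    by apply: le_trans (ltW lt) (hx z zs Pz).
  exists x; split => //; first by rewrite inE xs orbT.
  move=> z; rewrite inE => /orP[/eqP ->|zs Pz]; last exact: hx.
  move=> Py; rewrite leNgt; apply/negP => lt; exact: hn2.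
have Py : P y.
  case: hex => x; rewrite inE => /orP[/eqP -> //|xs Px]; case: hn; by exists x.
exists y; split => //; first by rewrite inE eqxx.
move=> z; rewrite inE => /orP[/eqP -> //|zs Pz]; case: hn; by exists z.
Qed.

Definition box (K : nat) : seq (int * int) :=
  [seq (i%:Z - K%:Z, j%:Z - K%:Z) | i <- iota 0 (2 * K).+1, j <- iota 0 (2 * K).+1].

Lemma mem_box (K : nat) (a b : int) : - (K%:Z) <= a <= K%:Z -> - (K%:Z) <= b <= K%:Z -> (a, b) \in box K.
Proof.
move=> /andP[ha1 ha2] /andP[hb1 hb2]; apply/allpairsP; exists (absz (a + K%:Z), absz (b + K%:Z)).
split; rewrite ?mem_iota /=; try (apply/andP; split); try lia.
congr (_, _); lia.
Qed.

Lemma Fbound (q : 'I_3 -> R * R) (hQ : cross q != 0) (F0 : R) (a b : int) :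
  F3 (fun i => dot (a%:~R, b%:~R) (q i)) <= F0 ->
  let C := (`|(q i1).1 - (q i0).1| + `|(q i1).2 - (q i0).2| + `|(q i2).1 - (q i0).1|
            + `|(q i2).2 - (q i0).2|) * F0 / `|cross q| in
  `|a%:~R| <= C /\ `|b%:~R| <= C.
Proof.
set F := F3 _ => hF C.
set e := (q i1).1 - (q i0).1 in C *; set f := (q i1).2 - (q i0).2 in C *.
set g := (q i2).1 - (q i0).1 in C *; set h := (q i2).2 - (q i0).2 in C *.
have eD : cross q = e * h - f * g by [].
set t1 := dot (a%:~R, b%:~R) (q i1) - dot (a%:~R, b%:~R) (q i0).
set t2 := dot (a%:~R, b%:~R) (q i0) - dot (a%:~R, b%:~R) (q i2).
have ht1 : `|t1| <= F by rewrite /F /F3 /max3 !eqs3 le_max lexx.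
have ht2 : `|t2| <= F by rewrite /F /F3 /max3 !eqs3 !le_max lexx !orbT.
have F0p : 0 <= F by apply: le_trans ht1.
have ea : a%:~R * cross q = h * t1 + f * t2 by rewrite eD /t1 /t2 /dot /e /f /g /h /=; ring.
have eb : b%:~R * cross q = - e * t2 - g * t1 by rewrite eD /t1 /t2 /dot /e /f /g /h /=; ring.
have hD : 0 < `|cross q| by rewrite normr_gt0.
have n1 := normr_ge0 t1; have n2 := normr_ge0 t2.
have ne := normr_ge0 e; have nf := normr_ge0 f; have ng := normr_ge0 g; have nh := normr_ge0 h.
have k1 : `|h| * `|t1| <= `|h| * F0 by apply: ler_wpM2l => //; apply: le_trans hF.
have k2 : `|f| * `|t2| <= `|f| * F0 by apply: ler_wpM2l => //; apply: le_trans hF.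
have k3 : `|e| * `|t2| <= `|e| * F0 by apply: ler_wpM2l => //; apply: le_trans hF.
have k4 : `|g| * `|t1| <= `|g| * F0 by apply: ler_wpM2l => //; apply: le_trans hF.
have F0p' : 0 <= F0 by apply: le_trans hF.
have k5 := mulr_ge0 ne F0p'; have k6 := mulr_ge0 nf F0p'.
have k7 := mulr_ge0 ng F0p'; have k8 := mulr_ge0 nh F0p'.
split; rewrite /C ler_pdivlMr // -normrM.
  rewrite ea; apply: le_trans (ler_normD _ _) _; rewrite !normrM.
  rewrite !mulrDl; lra.
rewrite eb; apply: le_trans (ler_normB _ _) _; rewrite !normrM normrN.
rewrite !mulrDl; lra.
Qed.

Definition FQ (q : 'I_3 -> R * R) (u : R * R) := F3 (fun i => dot u (q i)).

Lemma F3_shift (a : 'I_3 -> R) c : F3 (fun i => a i + c) = F3 a.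
Proof.
have e : forall x y : R, x + c - (y + c) = x - y by move=> *; ring.
by rewrite /F3 /max3 !e.
Qed.

Lemma dotc (a b X Y : int) : dot (a%:~R, b%:~R) (X%:~R, Y%:~R) = (a * X + b * Y)%:~R :> R.
Proof. by rewrite /dot /= rmorphD !rmorphM. Qed.

Lemma inf_of_min (S : set R) m : is_min S m -> inf S = m.
Proof.
move=> [Sm hm]; apply/eqP; rewrite eq_le; apply/andP; split.
  by apply: (ge_inf (E := S)) => //; exists m.
by apply: lb_le_inf => //; exists m.
Qed.

Lemma zcolE (z : 'I_3 -> int) i : zcol z i 0 = (z i)%:~R :> R.
Proof. by rewrite mxE. Qed.

Lemma int_bound (a : int) (C : R) : `|a%:~R| <= C -> - ((absz (Num.floor C))%:Z) <= a <= (absz (Num.floor C))%:Z.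
Proof.
rewrite -intr_norm -floor_ge_int => h.
have : `|a| <= (absz (Num.floor C))%:Z by apply: le_trans h _; rewrite abszE ler_norm.
by rewrite ler_norml.
Qed.

End Gen.

Theorem lemma12 (R : realType) (p q : 'I_3 -> R * R) (B : 'M[R]_3)
  (hpZ : forall i, Z2 (p i))
  (hponly : forall x, Z2 x -> conv3 p x -> exists i, x = p i)
  (hPtri : \det (homog p) != 0)
  (hQtri : \det (homog q) != 0)
  (hB : homog q = B *m homog p) :
  is_min [set norminf (Dmat *m B *m zcol z) |
            z in [set z : 'I_3 -> int | exists i j, z i != z j]]
         (lw (conv3 q))
  /\
  forall x : 'I_3 -> R,
    (forall i, 0 < x i < 1) ->
    (forall i, p i = ((1 - x i) * (q (s3 i)).1 + x i * (q (s3 (s3 i))).1,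
                      (1 - x i) * (q (s3 i)).2 + x i * (q (s3 (s3 i))).2)) ->
    let den := x i0 * x i1 * x i2 + (1 - x i0) * (1 - x i1) * (1 - x i2) in
    (exists M,
       is_min [set max3 (fun i => `|x i * (y i)%:~R + (1 - x (s3 i)) * (y (s3 i))%:~R|) |
                 y in [set y : 'I_3 -> int | (exists i, y i != 0) /\ y i0 + y i1 + y i2 = 0]] M
       /\ lw (conv3 q) = M / den)
    /\ tri_area q = 1 / (2 * den).
Proof.
have [XY hXY] : {XY : 'I_3 -> int * int & forall i, p i = ((XY i).1%:~R, (XY i).2%:~R)}.
  apply: (@boolp.choice _ _ (fun i (ab : int * int) => p i = (ab.1%:~R, ab.2%:~R))) => i.
  by have [a [b ->]] := hpZ i; exists (a, b).
pose X i := (XY i).1; pose Y i := (XY i).2.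
have ep : p = (fun i => ((X i)%:~R, (Y i)%:~R)) by apply: funext => i; exact: hXY i.
clear hXY hpZ; subst p.
have hD : ((X i1 - X i0) * (Y i2 - Y i0) - (Y i1 - Y i0) * (X i2 - X i0))%:~R != 0 :> R.
  by rewrite !(rmorphB, rmorphM); move: hPtri; rewrite det_homog /cross.
have hU := @unimod R X Y hponly hD.
have hQ : cross q != 0 by rewrite -det_homog.
have hA : forall z : 'I_3 -> int, (exists i j, z i != z j) ->
    exists a b : int, (a, b) != (0, 0) /\ norminf (Dmat *m B *m zcol z) = FQ q (a%:~R, b%:~R).
  move=> z hz.
  have [u1 [u2 [E1 E2]]] := @solve2 _ _ _ _ hU (z i1 - z i0) (z i2 - z i0).
  pose C := z i0 - (u1 * X i0 + u2 * Y i0).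
  have hzc : zcol z = homog (fun i => ((X i)%:~R, (Y i)%:~R)) *m @vec3 R (u1%:~R, u2%:~R) C%:~R.
    apply/matrixP => i j; rewrite ord1 homog_vec3 zcolE dotc -rmorphD; congr (_%:~R).
    case: (ord3P i) => [->|[->|->]]; rewrite /C.
    - ring.
    - have -> : z i1 = (u1 * (X i1 - X i0) + u2 * (Y i1 - Y i0)) + z i0 by rewrite E1; ring.
      ring.
    - have -> : z i2 = (u1 * (X i2 - X i0) + u2 * (Y i2 - Y i0)) + z i0 by rewrite E2; ring.
      ring.
  exists u1, u2; split.
    apply/negP => /eqP [h1 h2].
    move: E1 E2; rewrite h1 h2 !mul0r addr0 => /eqP; rewrite eq_sym subr_eq0 => /eqP e1 /eqP.
    rewrite eq_sym subr_eq0 => /eqP e2.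
    case: hz => i [j]; apply/negP/negPn/eqP.
    by case: (ord3P i) => [->|[->|->]]; case: (ord3P j) => [->|[->|->]]; rewrite ?e1 ?e2.
  rewrite hzc -!mulmxA (mulmxA B) -hB norminf_D.
  under eq_fun do rewrite homog_vec3.
  by rewrite F3_shift.
have hBb : forall a b : int, (a, b) != (0, 0) ->
    exists2 z : 'I_3 -> int, (exists i j, z i != z j) & norminf (Dmat *m B *m zcol z) = FQ q (a%:~R, b%:~R).
  move=> a b hab; exists (fun i => a * X i + b * Y i).
    apply: contrapT => hn.
    have e1 : a * X i1 + b * Y i1 = a * X i0 + b * Y i0.
      apply/eqP; apply: contrapT => h; apply: hn; by exists i1, i0; apply/negP.
    have e2 : a * X i2 + b * Y i2 = a * X i0 + b * Y i0.
      apply/eqP; apply: contrapT => h; apply: hn; by exists i2, i0; apply/negP.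
    have [] := @indep2 _ _ _ _ hU a b.
    - have -> : a * (X i1 - X i0) + b * (Y i1 - Y i0) = (a * X i1 + b * Y i1) - (a * X i0 + b * Y i0) by ring.
      by rewrite e1 subrr.
    - have -> : a * (X i2 - X i0) + b * (Y i2 - Y i0) = (a * X i2 + b * Y i2) - (a * X i0 + b * Y i0) by ring.
      by rewrite e2 subrr.
    by move=> ha hb; move: hab; rewrite ha hb eqxx.
  have hzc : zcol (fun i => a * X i + b * Y i) = homog (fun i => ((X i)%:~R, (Y i)%:~R)) *m @vec3 R (a%:~R, b%:~R) 0.
    by apply/matrixP => i j; rewrite ord1 homog_vec3 zcolE dotc addr0.
  rewrite hzc -!mulmxA (mulmxA B) -hB norminf_D.
  under eq_fun do rewrite homog_vec3.
  by rewrite /FQ; congr F3; apply: funext => i; rewrite addr0.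
have [[a0 b0] [abne abmin]] : exists ab : int * int, ab != (0, 0) /\
    forall a b : int, (a, b) != (0, 0) -> FQ q (ab.1%:~R, ab.2%:~R) <= FQ q (a%:~R, b%:~R).
  pose F0 := FQ q (1%:~R, 0%:~R).
  pose K := absz (Num.floor ((`|(q i1).1 - (q i0).1| + `|(q i1).2 - (q i0).2| + `|(q i2).1 - (q i0).1|
            + `|(q i2).2 - (q i0).2|) * F0 / `|cross q|)).
  have inbox : forall a b : int, FQ q (a%:~R, b%:~R) <= F0 -> (a, b) \in box K.
    move=> a b h; have [h1 h2] := @Fbound R q hQ _ _ _ h.
    by apply: mem_box; apply: int_bound.
  have [|ab [abin abne' abmin]] := @seq_min R _ (box K) (fun ab => ab != (0, 0))
      (fun ab => FQ q (ab.1%:~R, ab.2%:~R)).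
    by exists (1, 0) => //; apply: inbox; exact: lexx.
  exists ab; split => // a b hab.
  case: (lerP (FQ q (a%:~R, b%:~R)) F0) => h.
    exact: abmin (inbox _ _ h) hab.
  apply: le_trans (ltW h); exact: abmin (inbox 1 0 (lexx _)) _.
simpl in abmin.
pose m := FQ q (a0%:~R, b0%:~R).
have hlw : lw (conv3 q) = m.
  apply: inf_of_min; split.
    exists (a0%:~R, b0%:~R); last by rewrite width_F.
    split; first by exists a0, b0.
    case=> /eqP h1 /eqP h2; move: abne; rewrite intr_eq0 in h1; rewrite intr_eq0 in h2.
    by rewrite (eqP h1) (eqP h2) eqxx.
  move=> w [u [[a [b ->]] hu0] <-]; rewrite width_F; apply: abmin.
  by apply/negP => /eqP [ha hb]; apply: hu0; rewrite ha hb.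
split.
  rewrite hlw; split.
    have [z hz hzv] := hBb a0 b0 abne; by exists z.
  by move=> s [z hz <-]; have [a [b [hab ->]]] := hA z hz; exact: abmin.
move=> x hx hp den.
have /andP[x0p x0l] := hx i0; have /andP[x1p x1l] := hx i1; have /andP[x2p x2l] := hx i2.
have denp : 0 < den.
  have := mulr_gt0 (mulr_gt0 x0p x1p) x2p.
  have : 0 <= (1 - x i0) * (1 - x i1) * (1 - x i2).
    by apply: mulr_ge0; [apply: mulr_ge0|]; rewrite subr_ge0 ltW.
  rewrite /den; lra.
have dn0 : den != 0 by rewrite gt_eqF.
have [px0 py0] := hp i0; have [px1 py1] := hp i1; have [px2 py2] := hp i2.
rewrite !eqs3 in px0 py0 px1 py1 px2 py2.
have Vkey : forall (u : R * R) (y : 'I_3 -> int),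
   (forall i, (y i)%:~R = dot u ((X (s3 (s3 i)))%:~R, (Y (s3 (s3 i)))%:~R)
                          - dot u ((X (s3 i))%:~R, (Y (s3 i))%:~R)) ->
   max3 (fun i => `|x i * (y i)%:~R + (1 - x (s3 i)) * (y (s3 i))%:~R|) = den * FQ q u.
  move=> u y hy.
  rewrite /max3 /FQ /F3 /max3 !hy !eqs3 !maxr_pMr ?ltW //.
  have e : forall t, den * `|t| = `|den * t| by move=> t; rewrite normrM gtr0_norm.
  rewrite !e /dot /= px0 py0 px1 py1 px2 py2.
  have em : forall a b c a' b' c' : R, a = a' -> b = b' -> c = c' ->
      Num.max `|a| (Num.max `|b| `|c|) = Num.max `|a'| (Num.max `|b'| `|c'|) by move=> ? ? ? ? ? ? -> -> ->.
  by apply: em; rewrite /den; ring.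
have low : forall y : 'I_3 -> int, (exists i, y i != 0) -> y i0 + y i1 + y i2 = 0 ->
    den * m <= max3 (fun i => `|x i * (y i)%:~R + (1 - x (s3 i)) * (y (s3 i))%:~R|).
  move=> y [k hk] hsum.
  have [u1 [u2 [E1 E2]]] := @solve2 _ _ _ _ hU (- (y i0 + y i1)) (- y i1).
  rewrite (Vkey (u1%:~R, u2%:~R)).
    rewrite ler_pM2l //; apply: abmin.
    apply/negP => /eqP [h1 h2]; move: E1 E2 hk; rewrite h1 h2 !mul0r addr0 => E1 E2.
    have ey1 : y i1 = 0 by apply/eqP; rewrite -oppr_eq0 -E2.
    have ey0 : y i0 = 0.
      have : y i0 + y i1 = 0 by apply/eqP; rewrite -oppr_eq0 -E1.
      by rewrite ey1 addr0.
    have ey2 : y i2 = 0 by move: hsum; rewrite ey0 ey1 !add0r.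
    by case: (ord3P k) => [->|[->|->]]; rewrite ?ey0 ?ey1 ?ey2 eqxx.
  move=> i; rewrite !dotc -rmorphB; congr (_%:~R).
  case: (ord3P i) => [->|[->|->]]; rewrite !eqs3.
  - have -> : u1 * X i2 + u2 * Y i2 - (u1 * X i1 + u2 * Y i1) =
      (u1 * (X i2 - X i0) + u2 * (Y i2 - Y i0)) - (u1 * (X i1 - X i0) + u2 * (Y i1 - Y i0)) by ring.
    by rewrite E1 E2; ring.
  - have -> : u1 * X i0 + u2 * Y i0 - (u1 * X i2 + u2 * Y i2) =
      - (u1 * (X i2 - X i0) + u2 * (Y i2 - Y i0)) by ring.
    by rewrite E2; ring.
  - have -> : u1 * X i1 + u2 * Y i1 - (u1 * X i0 + u2 * Y i0) =
      (u1 * (X i1 - X i0) + u2 * (Y i1 - Y i0)) by ring.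
    rewrite E1.
    have -> : y i2 = - (y i0 + y i1) + (y i0 + y i1 + y i2) by ring.
    by rewrite hsum addr0.
split.
  exists (den * m); split; last by rewrite hlw; field.
  pose z i := a0 * X i + b0 * Y i.
  pose ys i := z (s3 (s3 i)) - z (s3 i).
  split; last by move=> v [y [hy hs] <-]; exact: low.
  exists ys.
    split; last by rewrite /ys /z !eqs3; ring.
    apply: contrapT => hn.
    have e : forall i, ys i = 0.
      move=> i; apply/eqP; apply: contrapT => h; apply: hn; exists i; exact/negP.
    have e0 := e i0; have e1 := e i1; rewrite /ys /z !eqs3 in e0 e1.
    have [] := @indep2 _ _ _ _ hU a0 b0.
    - have -> : a0 * (X i1 - X i0) + b0 * (Y i1 - Y i0) =
        - ((a0 * X i2 + b0 * Y i2 - (a0 * X i1 + b0 * Y i1)) + (a0 * X i0 + b0 * Y i0 - (a0 * X i2 + b0 * Y i2))) by ring.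
      by rewrite e0 e1 addr0 oppr0.
    - have -> : a0 * (X i2 - X i0) + b0 * (Y i2 - Y i0) =
        - (a0 * X i0 + b0 * Y i0 - (a0 * X i2 + b0 * Y i2)) by ring.
      by rewrite e1 oppr0.
    by move=> ha hb; move: abne; rewrite ha hb eqxx.
  rewrite (Vkey (a0%:~R, b0%:~R)) //.
  by move=> i; rewrite /ys /z !dotc -rmorphB.
have cp : cross (fun i => ((X i)%:~R, (Y i)%:~R)) = den * cross q.
  by rewrite /cross /= px0 py0 px1 py1 px2 py2 /den; ring.
have cp2 : cross (fun i => ((X i)%:~R, (Y i)%:~R) : R * R) * cross (fun i => ((X i)%:~R, (Y i)%:~R)) = 1.
  have -> : cross (fun i => ((X i)%:~R, (Y i)%:~R) : R * R) =
      ((X i1 - X i0) * (Y i2 - Y i0) - (Y i1 - Y i0) * (X i2 - X i0))%:~R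
    by rewrite !(rmorphB, rmorphM) /cross.
  by rewrite -rmorphM hU.
rewrite cp in cp2.
have n1 : `|den * cross q| * `|den * cross q| = 1 by rewrite -normrM cp2 normr1.
have n2 : `|den * cross q| = 1 by have := normr_ge0 (den * cross q); nra.
rewrite normrM gtr0_norm // in n2.
rewrite /tri_area det_homog.
have -> : `|cross q| = 1 / den by rewrite -n2; field.
by field.
Qed.
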